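(* Let $K\ge1$, $\Delta_0,B>0$, and for $k=1,\dots,K$ let $m_k\ge0$, $v_k\ge0$. Let $\mathcal{G}\subset\mathbb{R}^K$ be the set of $\mathbf{r}$ for which there exist $\mathbf{p},\mathbf{y}\in\mathbb{R}^K$ and a $2K\times2K$ real matrix $\mathbf{H}=\begin{bmatrix}\mathbf{H}^{xx}&\mathbf{H}^{x\phi}\\(\mathbf{H}^{x\phi})^{\rm T}&\mathbf{H}^{\phi\phi}\end{bmatrix}$ (with $K\times K$ blocks) satisfying, for every $k$: $r_k\ge0$; $r_k\le\Delta_0B\,p_k\log_2(1+y_k/p_k)$; $0\le p_k\le1$; $\sum_kp_k\le1$; $H^{x\phi}_{k,k}=y_k-p_km_k$; $H^{\phi\phi}_{k,k}=v_k$ and $H^{\phi\phi}_{i,j}=0$ for $i\neq j$; $H^{xx}_{k,k}\le p_k-p_k^2$; $\sum_{i,j}H^{xx}_{i,j}\le\sum_ip_i-(\sum_ip_i)^2$; $\mathbf{H}\succeq0$. Then $\mathcal{G}$ is bounded.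
   Context: $\mathbf{H}\succeq0$ means $\mathbf{H}$ is positive semidefinite. In the rate constraint the function $p\log_2(1+y/p)$ is understood as its perspective (value $0$ at $p=0$). *)

(* Defs.v *)
From HB Require Import structures.
From mathcomp Require Import all_boot all_order all_algebra.
From mathcomp Require Import all_classical all_reals all_analysis.
Set Implicit Arguments. Unset Strict Implicit. Unset Printing Implicit Defensive.
Import Order.TTheory GRing.Theory Num.Theory.
Local Open Scope ring_scope.

Definition log2 {R : realType} (x : R) : R := ln x / ln 2.

Definition persp_log2 {R : realType} (p y : R) : R :=
  if p == 0 then 0 else p * log2 (1 + y / p).

Definition psdmx {R : realType} {n : nat} (H : 'M[R]_n) : Prop :=
  H^T = H /\ forall v : 'cV[R]_n, 0 <= (v^T *m H *m v) 0 0.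

Definition regionG {R : realType} (K : nat) (D0 B : R) (m v : 'I_K -> R)
    (r : 'I_K -> R) : Prop :=
  exists (p y : 'I_K -> R) (Hxx Hxphi Hphiphi : 'M[R]_K),
    (forall k, 0 <= r k) /\
    (forall k, r k <= D0 * B * persp_log2 (p k) (y k)) /\
    (forall k, 0 < p k -> 0 < 1 + y k / p k) /\
    (forall k, 0 <= p k <= 1) /\
    (\sum_(k < K) p k <= 1) /\
    (forall k, Hxphi k k = y k - p k * m k) /\
    (forall k, Hphiphi k k = v k) /\
    (forall i j, i != j -> Hphiphi i j = 0) /\
    (forall k, Hxx k k <= p k - p k ^+ 2) /\
    (\sum_(i < K) \sum_(j < K) Hxx i j <=
       \sum_(i < K) p i - (\sum_(i < K) p i) ^+ 2) /\
    psdmx (block_mx Hxx Hxphi Hxphi^T Hphiphi).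

(* Main.v *)
Require Import Defs.
From HB Require Import structures.
From mathcomp Require Import all_boot all_order all_algebra.
From mathcomp Require Import all_classical all_reals all_analysis.
From mathcomp Require Import ring lra.
Import Order.TTheory GRing.Theory Num.Theory.
Local Open Scope ring_scope.

Lemma quad_entry (R : realType) (n : nat) (H : 'M[R]_n) i j :
  ((delta_mx i (ord0 : 'I_1) : 'cV[R]_n)^T *m H *m delta_mx j (ord0 : 'I_1)) 0 0 = H i j.
Proof. by rewrite trmx_delta -rowE -colE !mxE. Qed.

Lemma quad_mx (R : realType) (n : nat) (H : 'M[R]_n) i j :
  ((delta_mx i (ord0 : 'I_1) : 'cV[R]_n)^T *m H *m delta_mx j (ord0 : 'I_1)) = const_mx (H i j).
Proof. apply/matrixP => x y; rewrite !ord1 quad_entry mxE //. Qed.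

Lemma psd2 (R : realType) (n : nat) (H : 'M[R]_n) i j (a b : R) :
  psdmx H -> 0 <= a ^+ 2 * H i i + 2 * a * b * H i j + b ^+ 2 * H j j.
Proof.
move=> [HT Hq].
have := Hq (a *: delta_mx i (ord0 : 'I_1) + b *: delta_mx j (ord0 : 'I_1)).
have -> : (a *: delta_mx i (ord0 : 'I_1) + b *: delta_mx j (ord0 : 'I_1))^T =
  a *: (delta_mx i (ord0 : 'I_1))^T + b *: (delta_mx j (ord0 : 'I_1))^T :> 'rV[R]_n.
  by apply/matrixP => x y; rewrite !mxE.
rewrite !mulmxDl !mulmxDr -!scalemxAl -!scalemxAr !quad_mx !mxE.
have -> : H j i = H i j by rewrite -{1}HT mxE.
by move=> h; apply: le_trans h _; rewrite le_eqVlt; apply/orP; left; apply/eqP; ring.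
Qed.

Theorem mainTheorem7 (R : realType) (K : nat) (hK : (1 <= K)%N)
    (D0 B : R) (hD0 : 0 < D0) (hB : 0 < B) (m v : 'I_K -> R)
    (hm : forall k, 0 <= m k) (hv : forall k, 0 <= v k) :
  exists M : R, forall r : 'I_K -> R,
    regionG D0 B m v r -> forall k, `|r k| <= M.
Proof.
have ln2 : 0 < ln (2 : R) by rewrite ln_gt0 // ltr1n.
exists (D0 * B / ln 2 * \sum_(k < K) (m k + 1 + v k)).
move=> r [p [y [Hxx [Hxp [Hpp [hr0 [hr [hpos [hp [hsum [hxp [hpp [hpp0 [hxx [hsxx hpsd]]]]]]]]]]]]]]] k.
rewrite ger0_norm //.
have hS : m k + 1 + v k <= \sum_(k < K) (m k + 1 + v k).
  rewrite (bigD1 k) //= lerDl; apply: sumr_ge0 => i _.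
  by have := hm i; have := hv i; lra.
have hc : 0 < D0 * B / ln 2 by rewrite divr_gt0 // mulr_gt0.
apply: (le_trans (hr k)); rewrite /persp_log2.
have [hp1 hp2] := andP (hp k).
case: ifP => [_|/eqP p0].
  by rewrite mulr0; apply: mulr_ge0; [exact: ltW|]; apply: le_trans hS; have := hm k; have := hv k; lra.
have pk : 0 < p k by rewrite lt_neqAle eq_sym; apply/andP; split=> //; apply/eqP.
have h2 := @psd2 R (K + K) _ (lshift K k) (rshift K k) (Hxp k k) (-1) hpsd.
rewrite block_mxEul block_mxEur block_mxEdr hxp hpp in h2.
have hh := hxx k.
have hx2 : (y k - p k * m k) ^+ 2 <= v k.
  have h1 : Hxx k k <= 1.
    have : 0 <= p k ^+ 2 by exact: sqr_ge0.
    lra.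
  move: h2; set x := y k - p k * m k; move=> h2.
  have h3 : 0 <= x ^+ 2 * (1 - Hxx k k) by apply: mulr_ge0; [exact: sqr_ge0|lra].
  have e : (-1) ^+ 2 = 1 :> R by rewrite sqrrN expr1n.
  rewrite e in h2.
  have e2 : x ^+ 2 * Hxx k k + 2 * x * -1 * x + 1 * v k = v k - x ^+ 2 - x ^+ 2 * (1 - Hxx k k) by ring.
  rewrite e2 in h2. lra.
have hy : y k <= m k + 1 + v k.
  have := hv k; have := hm k; move: hx2; set x := y k - p k * m k => hx2 ? ?.
  have -> : y k = x + p k * m k by rewrite /x; ring.
  have hpm : p k * m k <= m k.
    have : 0 <= (1 - p k) * m k by apply: mulr_ge0; lra.
    lra.
  have hx : x <= 1 + v k.
    case: (lerP x (1 + v k)) => // hlt.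
    have : (1 + v k) * (1 + v k) < x * x.
      apply: ltr_pM; lra.
    have : 0 <= v k * v k by apply: mulr_ge0.
    move: hx2; rewrite expr2; lra.
  lra.
have hl : ln (1 + y k / p k) <= y k / p k.
  apply: le_ln1Dx; have := hpos k pk.
  by lra.
rewrite /log2.
have e : D0 * B * (p k * (ln (1 + y k / p k) / ln 2)) = D0 * B / ln 2 * (p k * ln (1 + y k / p k)) by rewrite mulrC; field; rewrite gt_eqF.
rewrite e; apply: le_trans (_ : D0 * B / ln 2 * (m k + 1 + v k) <= _); last first.
  by apply: ler_wpM2l; [exact: ltW|].
apply: ler_wpM2l; first exact: ltW.
apply: le_trans hy.
apply: le_trans (_ : p k * (y k / p k) <= _).
  by apply: ler_wpM2l; [exact: ltW|].
by rewrite le_eqVlt; apply/orP; left; apply/eqP; field; rewrite gt_eqF.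
Qed.
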